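(* If $G$ is a bridgeless cubic graph, then $\omega'(G)\leq \frac{2}{3}\mu'_3(G)$.
   Context: A join of a graph $H$ is a set $J\subseteq E(H)$ such that every vertex has degree of the same parity in $H$ and in the spanning subgraph $(V(H),J)$. In a cubic graph every vertex has degree $1$ or $3$ in a join $J$; a vertex of degree $3$ in $J$ is a $J$-vertex and $n(J)$ is the number of $J$-vertices. The weak oddness $\omega'(G)$ is the minimum, over all joins $J$ of $G$, of the number of components with an odd number of vertices of the complement $(V(G),E(G)\setminus J)$. Given three joins $J_1,J_2,J_3$ of $G$, let $E_0$ be the set of edges lying in none of them; the weak core with respect to them is $G[E_0\cup E_2\cup E_3]$ (where $E_i$ is the set of edges in exactly $i$ of the joins), and it is called a weak $l$-core with $l=|E_0|+\frac{3}{2}\sum_{i=1}^3 n(J_i)$. Then $\mu'_3(G)$ is the minimum $l$ such that $G$ has a weak $l$-core, i.e. the minimum of $|E_0|+\frac{3}{2}\sum_{i=1}^3 n(J_i)$ over all triples of joins $J_1,J_2,J_3$ of $G$. *)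

(* Defs.v *)
From HB Require Import structures.
From mathcomp Require Import all_boot all_order all_algebra.
Set Implicit Arguments. Unset Strict Implicit. Unset Printing Implicit Defensive.
Import Order.TTheory GRing.Theory Num.Theory.

Record mgraph := MGraph {
  gV : finType;
  gE : finType;
  ends : gE -> gV * gV;
  loopless : forall e, (ends e).1 != (ends e).2
}.

Section Defs.
Variable G : mgraph.
Local Notation V := (gV G).
Local Notation E := (gE G).

Definition inc (e : E) (v : V) : bool :=
  ((ends e).1 == v) || ((ends e).2 == v).

Definition deg_in (F : {set E}) (v : V) : nat := #|[set e in F | inc e v]|.

Definition cubic : Prop := forall v : V, deg_in [set: E] v = 3.

Definition adj_in (F : {set E}) : rel V :=
  fun x y => [exists e in F, (ends e == (x, y)) || (ends e == (y, x))].

Definition bridgeless : Prop :=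
  forall e : E, connect (adj_in ([set: E] :\ e)) (ends e).1 (ends e).2.

Definition is_join (J : {set E}) : bool :=
  [forall v : V, odd (deg_in J v) == odd (deg_in [set: E] v)].

Definition nJ (J : {set E}) : nat := #|[set v : V | deg_in J v == 3]|.

Definition components (F : {set E}) : {set {set V}} :=
  [set [set y | connect (adj_in F) x y] | x : V].

Definition odd_comps (F : {set E}) : nat :=
  #|[set C in components F | odd #|C|]|.

Definition oddJ (J : {set E}) : nat := odd_comps (~: J).

(* weak oddness: minimum of oddJ over all joins ([set: E] is a join) *)
Definition weak_oddness : nat :=
  oddJ [arg min_(J < [set: E] | is_join J) oddJ J].

Definition triple := ({set E} * {set E} * {set E})%type.

Definition E0 (t : triple) : {set E} := ~: (t.1.1 :|: t.1.2 :|: t.2).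

Definition core_l (t : triple) : rat :=
  (#|E0 t|%:R + (3%:R / 2%:R) * (nJ t.1.1 + nJ t.1.2 + nJ t.2)%:R)%R.

(* 2 l, a natural number, used to select a minimizer *)
Definition core_l2 (t : triple) : nat :=
  2 * #|E0 t| + 3 * (nJ t.1.1 + nJ t.1.2 + nJ t.2).

Definition joins3 (t : triple) : bool :=
  [&& is_join t.1.1, is_join t.1.2 & is_join t.2].

Definition mu3' : rat :=
  core_l [arg min_(t < ([set: E], [set: E], [set: E]) | joins3 t) core_l2 t].

End Defs.

(* Main.v *)
Require Import Defs.
From HB Require Import structures.
From mathcomp Require Import all_boot all_order all_algebra.
From mathcomp Require Import ring lra.
Import Order.TTheory GRing.Theory Num.Theory.
Set Implicit Arguments. Unset Strict Implicit. Unset Printing Implicit Defensive.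

Section Gen.
Variable G : mgraph.
Local Notation V := (gV G).
Local Notation E := (gE G).

Lemma adj_sym (F : {set E}) : symmetric (adj_in F).
Proof.
move=> x y; apply/existsP/existsP => -[e /andP[eF H]]; exists e;
by rewrite eF orbC.
Qed.

Lemma connect_adj_sym (F : {set E}) : connect_sym (adj_in F).
Proof. exact/sym_connect_sym/adj_sym. Qed.

Definition cls (F : {set E}) x := [set y | connect (adj_in F) x y].

Lemma cls_eq F x y : connect (adj_in F) x y -> cls F x = cls F y.
Proof.
move=> cxy; apply/setP => z; rewrite !inE; apply/idP/idP => H.
  by apply: connect_trans H; rewrite connect_adj_sym.
exact: connect_trans cxy H.
Qed.

Lemma cls_self F x : x \in cls F x.
Proof. by rewrite inE connect0. Qed.

Lemma in_clsE F x y : (y \in cls F x) = (cls F y == cls F x).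
Proof.
apply/idP/eqP => [H|<-]; last exact: cls_self.
by rewrite inE in H; rewrite (cls_eq H).
Qed.

Lemma incE (e : E) (v : V) : inc e v = (v == (ends e).1) || (v == (ends e).2).
Proof. by rewrite /inc ![_ == v]eq_sym. Qed.

Lemma card_inc (e : E) : #|[set v | inc e v]| = 2.
Proof.
have -> : [set v | inc e v] = [set (ends e).1; (ends e).2].
  by apply/setP => v; rewrite !inE incE.
by rewrite cards2 (loopless e).
Qed.

Lemma adj_edge (F : {set E}) (e : E) : e \in F -> adj_in F (ends e).1 (ends e).2.
Proof. by move=> eF; apply/existsP; exists e; rewrite eF -surjective_pairing eqxx. Qed.

Lemma adj_inc (F : {set E}) (x y : V) : adj_in F x y ->
  exists e, [/\ e \in F, inc e x, inc e y & x != y].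
Proof.
case/existsP => e /andP[eF /orP[]] /eqP He; exists e; rewrite /inc He /= !eqxx ?orbT;
(split=> //; move: (loopless e); rewrite He /= => H; by rewrite // eq_sym).
Qed.

Lemma inc_adj (F : {set E}) (e : E) (x y : V) : e \in F -> inc e x -> inc e y -> x != y -> adj_in F x y.
Proof.
move=> eF; rewrite !incE => /orP[]/eqP-> /orP[]/eqP->; rewrite ?eqxx //= => _.
  exact: adj_edge.
by rewrite adj_sym; apply: adj_edge.
Qed.

Lemma sum_inc (F : {set E}) (C : {set V}) :
  \sum_(v in C) #|[set e in F | inc e v]| = \sum_(e in F) #|[set v in C | inc e v]|.
Proof.
under eq_bigr do rewrite -sum1_card.
rewrite (exchange_big_dep (fun e => e \in F)) /=; last by move=> v e _; rewrite inE => /andP[].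
apply: eq_bigr => e eF; rewrite -sum1_card; apply: eq_bigl => v; by rewrite !inE eF.
Qed.

Lemma card_inc_in (C : {set V}) (e : E) :
  #|[set v in C | inc e v]| = ((ends e).1 \in C) + ((ends e).2 \in C).
Proof.
have -> : [set v in C | inc e v] = C :&: [set (ends e).1; (ends e).2].
  by apply/setP => v; rewrite !inE incE.
have ne := loopless e.
case: ((ends e).1 \in C)/idP => H1; case: ((ends e).2 \in C)/idP => H2.
- by rewrite (setIidPr _) ?cards2 ?ne //; apply/subsetP => x; rewrite !inE => /orP[]/eqP->.
- have -> : C :&: [set (ends e).1; (ends e).2] = [set (ends e).1].
    apply/setP => x; rewrite !inE; case: (x =P (ends e).1) => [->|_]; rewrite ?H1 //=.
    by case: (x =P (ends e).2) => [->|]; rewrite ?andbF // (negbTE (introN idP H2)).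
  by rewrite cards1.
- have -> : C :&: [set (ends e).1; (ends e).2] = [set (ends e).2].
    apply/setP => x; rewrite !inE; case: (x =P (ends e).2) => [->|_]; rewrite ?H2 ?orbT //=.
    by case: (x =P (ends e).1) => [->|]; rewrite ?andbF // (negbTE (introN idP H1)).
  by rewrite cards1.
- have -> : C :&: [set (ends e).1; (ends e).2] = set0.
    apply/setP => x; rewrite !inE; case: (x =P (ends e).2) => [->|_]; rewrite ?orbT.
      by rewrite (negbTE (introN idP H2)).
    by case: (x =P (ends e).1) => [->|]; rewrite ?andbF // (negbTE (introN idP H1)).
  by rewrite cards0.
Qed.

Lemma handshake (F : {set E}) :
  \sum_v #|[set e in F | inc e v]| = 2 * #|F|.
Proof.
have := sum_inc F setT; rewrite (eq_bigl (fun v => true)) => [->|v]; last by rewrite inE.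
rewrite -sum1_card big_distrr /=; apply: eq_bigr => e _.
rewrite muln1 -(card_inc e); apply: eq_card => v; by rewrite !inE.
Qed.

Lemma closed_even (F : {set E}) (C : {set V}) :
  (forall e, e \in F -> ((ends e).1 \in C) = ((ends e).2 \in C)) ->
  ~~ odd (\sum_(v in C) #|[set e in F | inc e v]|).
Proof.
move=> Hc; rewrite sum_inc; elim/big_ind: _ => //.
  by move=> a b Ha Hb; rewrite oddD (negbTE Ha) (negbTE Hb).
by move=> e eF; rewrite card_inc_in (Hc e eF) addnn odd_double.
Qed.

End Gen.

Section G3.
Variable T : eqType.
Variable g : 'I_3 -> T.

Definition cnt (x : T) := \sum_(l < 3) (g l == x).
Definition noninj := [exists l, exists l', (l != l') && (g l == g l')].

Lemma ord3_cover (i j k l : 'I_3) : i != j -> i != k -> j != k ->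
  [|| l == i, l == j | l == k].
Proof.
by case: i => [[|[|[|i]]] Hi] //; case: j => [[|[|[|j]]] Hj] //;
   case: k => [[|[|[|k]]] Hk] //; case: l => [[|[|[|l]]] Hl].
Qed.

Lemma others (i : 'I_3) : exists j k : 'I_3, [/\ i != j, i != k & j != k].
Proof.
case: i => [[|[|[|i]]] Hi] //.
- by exists (Ordinal (isT : 1 < 3)), (Ordinal (isT : 2 < 3)).
- by exists (Ordinal (isT : 0 < 3)), (Ordinal (isT : 2 < 3)).
- by exists (Ordinal (isT : 0 < 3)), (Ordinal (isT : 1 < 3)).
Qed.

Lemma others2 (i j : 'I_3) : i != j -> exists k : 'I_3, i != k /\ j != k.
Proof.
by case: i => [[|[|[|i]]] Hi] //; case: j => [[|[|[|j]]] Hj] // _;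
  [exists (Ordinal (isT : 2 < 3))|exists (Ordinal (isT : 1 < 3))
  |exists (Ordinal (isT : 2 < 3))|exists (Ordinal (isT : 0 < 3))
  |exists (Ordinal (isT : 1 < 3))|exists (Ordinal (isT : 0 < 3))].
Qed.

Lemma sum3 (f : 'I_3 -> nat) (i j k : 'I_3) : i != j -> i != k -> j != k ->
  \sum_(l < 3) f l = f i + f j + f k.
Proof.
move=> ij ik jk.
have ji : j != i by rewrite eq_sym.
have ki : k != i by rewrite eq_sym.
have kj : k != j by rewrite eq_sym.
rewrite (bigD1 i) // (bigD1 j) ?ji // (bigD1 k) ?ki ?kj //.
rewrite big1; first by rewrite /= addn0 !addnA.
move=> l /andP[/andP[/andP[_ li] lj] lk].
by have := ord3_cover l ij ik jk; rewrite (negbTE li) (negbTE lj) (negbTE lk).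
Qed.

Section IJK.
Variables i j k : 'I_3.
Hypotheses (ij : i != j) (ik : i != k) (jk : j != k).

Lemma cntE x : cnt x = (g i == x) + (g j == x) + (g k == x).
Proof. exact: sum3. Qed.

Lemma noninjE : noninj = [|| g i == g j, g i == g k | g j == g k].
Proof.
apply/existsP/idP => [[l /existsP[l' /andP[ll' /eqP E]]]|].
  by case/or3P: (ord3_cover l ij ik jk) => /eqP El;
     case/or3P: (ord3_cover l' ij ik jk) => /eqP El'; subst l l';
     rewrite ?eqxx in ll'; rewrite // E eqxx ?orbT.
case/or3P => E.
- by exists i; apply/existsP; exists j; rewrite ij.
- by exists i; apply/existsP; exists k; rewrite ik.
- by exists j; apply/existsP; exists k; rewrite jk.
Qed.

Ltac crush3 a b c :=
  case: (eqVneq a b) => [E1|N1]; case: (eqVneq a c) => [E2|N2];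
  case: (eqVneq b c) => [E3|N3]; rewrite ?eqxx /= //; try subst;
  try match goal with H : is_true (?x != ?x) |- _ => by rewrite eqxx in H end.

Lemma G2 : cnt (g i) == 2 -> noninj.
Proof. rewrite ?noninjE ?cntE; move: (g i) (g j) (g k) => a b c; crush3 a b c. Qed.

Lemma G1 : \sum_(l < 3) (cnt (g l) == 2) <= 2.
Proof. rewrite (sum3 _ ij ik jk) ?noninjE ?cntE; move: (g i) (g j) (g k) => a b c; crush3 a b c. Qed.
Lemma G4 : cnt (g i) == 3 -> noninj.
Proof. rewrite ?noninjE ?cntE; move: (g i) (g j) (g k) => a b c; crush3 a b c. Qed.
Lemma G5 : (g i == g j) + (g i == g k) = (cnt (g i) == 2) + 2 * (cnt (g i) == 3).
Proof. rewrite ?noninjE ?cntE; move: (g i) (g j) (g k) => a b c; crush3 a b c. Qed.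
Lemma G6 : noninj -> cnt (g i) != 2 -> cnt (g j) != 2 -> cnt (g i) == 3.
Proof. rewrite ?noninjE ?cntE; move: (g i) (g j) (g k) => a b c; crush3 a b c. Qed.
Lemma G7 : cnt (g j) == 1 -> noninj -> cnt (g i) == 2.
Proof. rewrite ?noninjE ?cntE; move: (g i) (g j) (g k) => a b c; crush3 a b c. Qed.
Lemma G8 : ~~ noninj -> cnt (g i) == 1.
Proof. rewrite ?noninjE ?cntE; move: (g i) (g j) (g k) => a b c; crush3 a b c. Qed.
Lemma G9 : cnt (g i) == 3 -> g j == g i.
Proof. rewrite ?noninjE ?cntE; move: (g i) (g j) (g k) => a b c; crush3 a b c. Qed.
End IJK.
End G3.

Section Joins.
Variable G : mgraph.
Local Notation V := (gV G).
Local Notation E := (gE G).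
Hypothesis cub : cubic G.
Variable J : 'I_3 -> {set E}.
Hypothesis HJ : forall i, is_join (J i).

Lemma deg_le3 (F : {set E}) (v : V) : deg_in F v <= 3.
Proof.
rewrite -(cub v) /deg_in; apply: subset_leq_card; apply/subsetP => e.
by rewrite !inE => /andP[_ ->].
Qed.

Lemma degJ i v : (deg_in (J i) v == 1) || (deg_in (J i) v == 3).
Proof.
have := forallP (HJ i) v; rewrite cub /= => /eqP.
by have := deg_le3 (J i) v; case: (deg_in (J i) v) => [|[|[|[|]]]].
Qed.

Definition mult (e : E) := \sum_(i < 3) (e \in J i).
Definition normal (v : V) := [forall i, deg_in (J i) v == 1].
Definition Wv i (v : V) := [exists e : E, [&& e \in J i, inc e v & mult e == 2]].
Definition Tv (v : V) := [exists e : E, inc e v && (mult e == 3)].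
Definition core (v : V) := [exists e : E, inc e v && (mult e == 0)].

Lemma card_Inc (v : V) : #|[set e : E | inc e v]| = 3.
Proof. rewrite -(cub v) /deg_in; apply: eq_card => e; by rewrite !inE. Qed.

Lemma normal_g v : normal v ->
  exists g : 'I_3 -> E, forall i e, ((e \in J i) && inc e v) = (e == g i).
Proof.
move=> /forallP Hn.
have H : forall i : 'I_3, exists x : E, forall e, ((e \in J i) && inc e v) = (e == x).
  move=> i; have /cards1P[x Hx] := Hn i; exists x => e.
  by have := f_equal (fun A : {set E} => e \in A) Hx; rewrite !inE.
have [g Hg] := fin_all_exists H; by exists g.
Qed.


Section Local.
Variable v : V.
Variable g : 'I_3 -> E.
Hypothesis Hg : forall i e, ((e \in J i) && inc e v) = (e == g i).

Lemma g_in i : g i \in J i.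
Proof. by have := Hg i (g i); rewrite eqxx => /andP[]. Qed.
Lemma g_inc i : inc (g i) v.
Proof. by have := Hg i (g i); rewrite eqxx => /andP[]. Qed.

Lemma multE e : inc e v -> mult e = cnt g e.
Proof. move=> ie; apply: eq_bigr => i _; by rewrite eq_sym -Hg ie andbT. Qed.

Lemma WE i : Wv i v = (cnt g (g i) == 2).
Proof.
apply/existsP/idP => [[e /and3P[ei ie /eqP me]]|H].
  by have := Hg i e; rewrite ei ie => /esym/eqP Ee; rewrite -Ee -multE ?me.
by exists (g i); rewrite g_in g_inc multE ?g_inc.
Qed.

Lemma TE i : Tv v = (cnt g (g i) == 3).
Proof.
apply/existsP/idP => [[e /andP[ie /eqP me]]|H].
  have : 0 < cnt g e by rewrite -multE ?me.
  move=> pos; have [l /eqP El] : exists l, g l == e.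
    case: (pickP (fun l => g l == e)) => [l Hl|H]; first by exists l.
    by move: pos; rewrite /cnt big1 // => l _; rewrite H.
  have [j [k [ij ik jk]]] := others i.
  have H3 : cnt g (g l) == 3 by rewrite El -(multE ie) me.
  have [Eli|li] := eqVneq l i; first by rewrite -Eli.
  have [k' [lk' ik']] := others2 li.
  have := G9 (g:=g) li lk' ik' H3; move/eqP=> ->; exact: H3.
by exists (g i); rewrite g_inc multE ?g_inc.
Qed.

Lemma g_uniq i e : e \in J i -> inc e v -> e = g i.
Proof. by move=> ei ie; apply/eqP; rewrite -Hg ei ie. Qed.

Lemma cnt_pos e : (0 < cnt g e) = (e \in g @: setT).
Proof.
apply/idP/imsetP => [pos|[l _ ->]].
  case: (pickP (fun l => g l == e)) => [l /eqP Hl|H]; first by exists l.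
  by move: pos; rewrite /cnt big1 // => l _; rewrite H.
by rewrite /cnt (bigD1 l) //= eqxx.
Qed.

Lemma img_sub : g @: setT \subset [set e : E | inc e v].
Proof. by apply/subsetP => e /imsetP[l _ ->]; rewrite inE g_inc. Qed.

Lemma inj_noninj : ~~ noninj g -> injective g.
Proof.
move=> H l l' Ell; apply/eqP; apply: contraNT H => ll'.
by apply/existsP; exists l; apply/existsP; exists l'; rewrite ll' Ell eqxx.
Qed.

Lemma surj e : ~~ noninj g -> inc e v -> exists l, e = g l.
Proof.
move=> H ie.
have : g @: setT == [set e : E | inc e v].
  rewrite eqEcard img_sub card_Inc card_imset ?cardsT ?card_ord //; exact: inj_noninj.
move/eqP => Ei; have : e \in g @: setT by rewrite Ei inE.
by case/imsetP => l _ ->; exists l.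
Qed.

Lemma coreE : core v = noninj g.
Proof.
apply/existsP/idP => [[e /andP[ie /eqP me]]|H].
  apply: contraT => H; have [l El] := surj H ie.
  by move: me; rewrite (multE ie) El; have := cnt_pos (g l); rewrite imset_f // => /[swap] ->.
have : ~~ ([set e : E | inc e v] \subset g @: setT).
  apply/negP => sub.
  have Hc : #|g @: setT| == #|[set: 'I_3]|.
    have c3 : #|[set: 'I_3]| = #|[set e : E | inc e v]| by rewrite cardsT card_ord card_Inc.
    by rewrite eqn_leq leq_imset_card c3 subset_leq_card.
  have /imset_injP inj := Hc.
  move: H; rewrite /noninj => /existsP[l /existsP[l' /andP[ll' /eqP Ell]]].
  by move: ll'; rewrite (inj l l') ?inE ?eqxx.
case/subsetPn => e; rewrite inE => ie ne; exists e; rewrite ie /= (multE ie).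
by rewrite eqn0Ngt cnt_pos ne.
Qed.
End Local.

Definition Cl i x := cls (~: J i) x.
Definition special i (S : {set V}) := [forall v in S, [&& normal v, core v & ~~ Wv i v]].
Definition sv v := #|[set j | special j (Cl j v)]|.
Definition phi i v : rat :=
  (if ~~ normal v then 1 else if Wv i v then 2%:R^-1
  else if Tv v && special i (Cl i v) then (sv v)%:R^-1 else 0)%R.
Definition E0s := [set e : E | mult e == 0].

Lemma phi_ge0 i v : (0 <= phi i v)%R.
Proof.
rewrite /phi; case: ifP => _ //; case: ifP => _; first by rewrite invr_ge0 ler0n.
by case: ifP => _ //; rewrite invr_ge0 ler0n.
Qed.

Lemma normal_T_core v : normal v -> Tv v -> core v.
Proof.
move=> nv; have [g Hg] := normal_g nv; have [j [k [ij ik jk]]] := others ord0.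
by rewrite (TE Hg ord0) (coreE Hg) => /(G4 ij ik jk).
Qed.

Lemma normal_W_core v i : normal v -> Wv i v -> core v.
Proof.
move=> nv; have [g Hg] := normal_g nv; have [j [k [ij ik jk]]] := others i.
by rewrite (WE Hg i) (coreE Hg) => /(G2 ij ik jk).
Qed.

Lemma normal_WT v i : normal v -> Wv i v -> Tv v -> False.
Proof.
move=> nv; have [g Hg] := normal_g nv.
by rewrite (WE Hg i) (TE Hg i) => /eqP->.
Qed.

Lemma E0v_pos v : core v -> 0 < #|[set e in E0s | inc e v]|.
Proof.
case/existsP => e /andP[ie me]; apply/card_gt0P; exists e; by rewrite !inE me ie.
Qed.

Lemma sum_if (b : 'I_3 -> bool) (c : rat) :
  (\sum_(i < 3) (if b i then c else 0) = c *+ #|[set i | b i]|)%R.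
Proof.
rewrite -big_mkcond /= -sumr_const; apply: eq_bigl => i; by rewrite inE.
Qed.

Lemma budget v :
  (\sum_(i < 3) phi i v <= 3%:R * #|[set i | deg_in (J i) v == 3]|%:R
                           + #|[set e in E0s | inc e v]|%:R)%R.
Proof.
case nv: (normal v); last first.
  rewrite /phi nv /= sumr_const card_ord.
  have : 0 < #|[set i | deg_in (J i) v == 3]|.
    move/negbT: nv; rewrite negb_forall => /existsP[i Hi]; apply/card_gt0P; exists i.
    by rewrite inE; have := degJ i v; rewrite (negbTE Hi).
  move: #|[set i | deg_in (J i) v == 3]| => n n0.
  apply: ler_wpDr; first by rewrite ler0n.
  by rewrite -natrM ler_nat -{1}(muln1 3) leq_mul2l n0 orbT.
apply: ler_wpDl; first by rewrite mulr_ge0 ?ler0n.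
case Tv_v: (Tv v).
  have Hc := E0v_pos (normal_T_core nv Tv_v).
  have -> : (\sum_(i < 3) phi i v = \sum_(i < 3) (if special i (Cl i v) then (sv v)%:R^-1 else 0))%R.
    apply: eq_bigr => i _; rewrite /phi nv /= Tv_v /=.
    by case: ifP => // W; have := normal_WT nv W Tv_v.
  rewrite sum_if -/(sv v); case: (sv v) => [|n]; first by rewrite mulr0n ler0n.
  by rewrite -[X in (X <= _)%R]mulr_natr mulVf ?pnatr_eq0 // ler1n.
have -> : (\sum_(i < 3) phi i v = \sum_(i < 3) (if Wv i v then 2%:R^-1 else 0))%R.
  apply: eq_bigr => i _; rewrite /phi nv /= Tv_v /=; by case: ifP.
rewrite sum_if.
have [g Hg] := normal_g nv; have [j [k [ij ik jk]]] := others ord0.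
have H2 : #|[set i | Wv i v]| <= 2.
  have -> : #|[set i | Wv i v]| = \sum_(l < 3) (cnt g (g l) == 2).
    rewrite -sum1_card big_mkcond /=; apply: eq_bigr => l _.
    by rewrite inE (WE Hg l); case: (_ == 2).
  exact: (@G1 _ g _ _ _ ij ik jk).
move: H2; case Hn : #|[set i | Wv i v]| => [|n] H2.
  by rewrite mulr0n ler0n.
have : 0 < #|[set e in E0s | inc e v]|.
  apply: E0v_pos; have : 0 < #|[set i | Wv i v]| by rewrite Hn.
  by case/card_gt0P => i; rewrite inE => /(normal_W_core nv).
case: #|[set e in E0s | inc e v]| => [//|m] _.
have h1 : (1 <= m.+1%:R :> rat)%R by rewrite ler1n.
case: n Hn H2 => [|[|//]] _ _.
  rewrite mulr1n (le_trans _ h1) // invf_le1 ?ltr0n // ler1n //.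
by rewrite -[X in (X <= _)%R]mulr_natr mulVf ?pnatr_eq0.
Qed.

Lemma Cl_self i x : x \in Cl i x.
Proof. exact: cls_self. Qed.

Lemma Cl_eq i x y : y \in Cl i x -> Cl i y = Cl i x.
Proof. by rewrite /Cl in_clsE => /eqP. Qed.

Lemma Cl_adj i x y z : adj_in (~: J i) y z -> (y \in Cl i x) = (z \in Cl i x).
Proof.
move=> a; rewrite !inE; apply/idP/idP => H.
  by apply: connect_trans H (connect1 a).
by apply: connect_trans H (connect1 _); rewrite adj_sym.
Qed.

Lemma Cl_edge i x e : e \notin J i -> ((ends e).1 \in Cl i x) = ((ends e).2 \in Cl i x).
Proof. by move=> eJ; apply: Cl_adj; apply: adj_edge; rewrite inE. Qed.

Definition Pv i j v := [exists e : E, [&& e \in J i, e \in J j & inc e v]].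

Lemma Pv_g v g i j : (forall i e, ((e \in J i) && inc e v) = (e == g i)) ->
  Pv i j v = (g i == g j).
Proof.
move=> Hg; apply/existsP/idP => [[e /and3P[ei ej ie]]|/eqP E1].
  by rewrite -(g_uniq Hg ei ie) -(g_uniq Hg ej ie).
by exists (g i); rewrite (g_in Hg i) (g_inc Hg i) E1 (g_in Hg j).
Qed.

Lemma F_card v g i j : (forall i e, ((e \in J i) && inc e v) = (e == g i)) ->
  #|[set e in J j :\: J i | inc e v]| + Pv i j v = 1.
Proof.
move=> Hg; rewrite (Pv_g i j Hg).
case: (eqVneq (g i) (g j)) => [E1|N1] /=.
  rewrite addn1; congr S; apply/eqP; rewrite cards_eq0; apply/eqP/setP => e.
  rewrite !inE; apply/negP => /andP[/andP[eni ej] ie].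
  by move: eni; rewrite (g_uniq Hg ej ie) -E1 (g_in Hg i).
rewrite addn0; apply/eqP/cards1P; exists (g j); apply/setP => e; rewrite !inE.
apply/idP/eqP => [/andP[/andP[_ ej] ie]|->]; first by rewrite -(g_uniq Hg ej ie).
rewrite (g_in Hg j) (g_inc Hg j) !andbT; apply/negP => gi.
by move: N1; rewrite (g_uniq Hg gi (g_inc Hg j)) eqxx.
Qed.

Lemma sum_bool (A : {set V}) (b : pred V) :
  \sum_(v in A) (b v : nat) = #|[set v in A | b v]|.
Proof.
rewrite -sum1_card big_mkcond [RHS]big_mkcond; apply: eq_bigr => v _; rewrite inE.
by case: (v \in A); case: (b v).
Qed.

Lemma parity i j x : i != j -> (forall v, v \in Cl i x -> normal v) ->
  odd #|Cl i x| = odd #|[set v in Cl i x | Pv i j v]|.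
Proof.
move=> ij nC.
have H : \sum_(v in Cl i x) (#|[set e in J j :\: J i | inc e v]| + Pv i j v) = #|Cl i x|.
  rewrite -sum1_card; apply: eq_bigr => v vC; have [g Hg] := normal_g (nC v vC).
  exact: F_card.
rewrite big_split /= sum_bool in H; rewrite -H oddD.
have -> // : odd (\sum_(v in Cl i x) #|[set e in J j :\: J i | inc e v]|) = false.
apply/negbTE; apply: closed_even => e; rewrite in_setD => /andP[eni _].
exact: Cl_edge.
Qed.

Lemma parity_TW i x : (forall v, v \in Cl i x -> normal v) -> odd #|Cl i x| ->
  #|[set v in Cl i x | Wv i v]| <= 1 ->
  [set v in Cl i x | Wv i v] = set0 /\ exists u, u \in Cl i x /\ Tv u.
Proof.
move=> nC oC A1.
have [j [k [ij ik jk]]] := others i.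
have oj := parity ij nC; have ok := parity ik nC.
have H : #|[set v in Cl i x | Pv i j v]| + #|[set v in Cl i x | Pv i k v]| =
         #|[set v in Cl i x | Wv i v]| + 2 * #|[set v in Cl i x | Tv v]|.
  rewrite -!sum_bool -big_split big_distrr -big_split /=; apply: eq_bigr => v vC.
  have [g Hg] := normal_g (nC v vC).
  by rewrite (Pv_g i j Hg) (Pv_g i k Hg) (WE Hg i) (TE Hg i) (@G5 _ g _ _ _ ij ik jk).
set a := #|[set v in Cl i x | Pv i j v]| in H oj.
set b := #|[set v in Cl i x | Pv i k v]| in H ok.
set w := #|[set v in Cl i x | Wv i v]| in H A1 *.
set t := #|[set v in Cl i x | Tv v]| in H *.
have oa : odd a by rewrite -oj.
have ob : odd b by rewrite -ok.
have w0 : w = 0.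
  move: A1 (f_equal odd H); rewrite oddD oa ob oddD oddM /= addbF.
  by case: (w) => [|[|]].
split; first by apply/eqP; rewrite -cards_eq0 -/w w0.
have : 0 < t.
  move: H; rewrite w0 add0n; case: t => // /eqP; rewrite muln0 addn_eq0 => /andP[/eqP a0 _].
  by move: oa; rewrite a0.
by case/card_gt0P => u; rewrite inE => /andP[uC Tu]; exists u.
Qed.

Lemma noncore_adj i y z : adj_in (~: J i) y z -> normal y -> normal z ->
  ~~ Wv i z -> ~~ core y -> ~~ core z.
Proof.
move=> a ny nz Wz cy.
have [e [eJ iy iz yz]] := adj_inc a; rewrite inE in eJ.
have [gy Hy] := normal_g ny; have [gz Hz] := normal_g nz.
rewrite (coreE Hy) in cy.
have [l El] := surj Hy cy iy.
have [k' [lk' ik']] := others (l).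
have [m1 _] : cnt gy (gy l) == 1 /\ True.
  have [j2 [k2 [lj2 lk2 jk2]]] := others l.
  by split => //; apply: (@G8 _ gy _ _ _ lj2 lk2 jk2).
have me : mult e = 1 by rewrite (multE Hy iy) El; apply/eqP.
have ezl : e = gz l by apply: (g_uniq Hz) => //; rewrite El (g_in Hy l).
have il : i != l by apply: contraNneq eJ => ->; rewrite El (g_in Hy l).
have [k3 [ik3 lk3]] := others2 il.
rewrite (coreE Hz); apply/negP => nj.
have c1 : cnt gz (gz l) == 1 by rewrite -ezl -(multE Hz iz) me.
have := @G7 _ gz _ _ _ il ik3 lk3 c1 nj.
by rewrite -(WE Hz) (negbTE Wz).
Qed.

Lemma T_step i j y z : i != j -> adj_in (~: J i) y z -> normal y -> core y ->
  ~~ Wv i y -> ~~ Wv j y -> Tv y /\ adj_in (~: J j) y z.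
Proof.
move=> ij a ny cy Wi Wj.
have [g Hg] := normal_g ny.
have [k [ik jk]] := others2 ij.
have T3 : cnt g (g i) == 3.
  apply: (@G6 _ g _ _ _ ij ik jk); first by rewrite -(coreE Hg).
    by rewrite -(WE Hg).
  by rewrite -(WE Hg).
split; first by rewrite (TE Hg i).
have [e [eJ iy iz yz]] := adj_inc a; rewrite inE in eJ.
apply: (inc_adj (e := e)) => //; rewrite inE; apply/negP => ej.
have := @G9 _ g _ _ _ ij ik jk T3; rewrite -(g_uniq Hg ej iy) => /eqP ei.
by move: eJ; rewrite ei (g_in Hg i).
Qed.

Lemma T_of i j y : i != j -> normal y -> core y -> ~~ Wv i y -> ~~ Wv j y -> Tv y.
Proof.
move=> ij ny cy Wi Wj; have [g Hg] := normal_g ny.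
have [k [ik jk]] := others2 ij.
rewrite (TE Hg i); apply: (@G6 _ g _ _ _ ij ik jk); first by rewrite -(coreE Hg).
  by rewrite -(WE Hg).
by rewrite -(WE Hg).
Qed.

Lemma mult0 e i : mult e = 0 -> e \notin J i.
Proof. by move=> m0; apply/negP => ei; move: m0; rewrite /mult (bigD1 i) //= ei. Qed.

Lemma other_end (e : E) (u : V) : inc e u -> exists w, inc e w /\ u != w.
Proof.
rewrite incE => /orP[]/eqP->.
  by exists (ends e).2; split; [rewrite incE eqxx orbT | exact: loopless e].
by exists (ends e).1; split; [rewrite incE eqxx | rewrite eq_sym; exact: loopless e].
Qed.

Lemma comp_bound i x : odd #|Cl i x| -> (1 <= \sum_(v in Cl i x) phi i v)%R.
Proof.
move=> oC.
case: (boolP [forall v in Cl i x, normal v]) => [/forall_inP nC|]; last first.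
  rewrite negb_forall_in => /exists_inP[v vC nv].
  rewrite (bigD1 v) //= {1}/phi nv /= lerDl; apply: sumr_ge0 => w _; exact: phi_ge0.
case: (leqP 2 #|[set v in Cl i x | Wv i v]|) => [A2|A1].
  rewrite (bigID (Wv i)) /=; apply: ler_wpDr.
    by apply: sumr_ge0 => w _; exact: phi_ge0.
  have -> : (\sum_(v in Cl i x | Wv i v) phi i v = \sum_(v in [set v in Cl i x | Wv i v]) 2%:R^-1)%R.
    rewrite big_mkcond [RHS]big_mkcond; apply: eq_bigr => v _; rewrite inE.
    case vC: (v \in Cl i x) => //=; case Wv_: (Wv i v) => //=.
    by rewrite /phi nC // Wv_.
  rewrite sumr_const -mulr_natr.
  have h : (2%:R <= #|[set v in Cl i x | Wv i v]|%:R :> rat)%R by rewrite ler_nat.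
  lra.
have A1' : #|[set v in Cl i x | Wv i v]| <= 1 by [].
have [A0 [u [uC Tu]]] := parity_TW nC oC A1'.
have noW v : v \in Cl i x -> ~~ Wv i v.
  move=> vC; apply/negP => W; have : v \in [set v in Cl i x | Wv i v] by rewrite inE vC W.
  by rewrite A0 inE.
have Clu : Cl i u = Cl i x := Cl_eq uC.
have coreC v : v \in Cl i x -> core v.
  move=> vC.
  have cl : closed (adj_in (~: J i)) [pred y | (y \in Cl i x) && core y].
    move=> y z ayz; rewrite [y \in _]inE [z \in _]inE /= -(Cl_adj x ayz).
    case yC: (y \in Cl i x) => //=.
    have zC : z \in Cl i x by rewrite -(Cl_adj x ayz).
    apply/idP/idP => c; apply: contraLR c => nc.
      apply: (@noncore_adj i z y) => //; [by rewrite adj_sym|exact: nC|exact: nC|exact: noW].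
    apply: (@noncore_adj i y z) => //; [exact: nC|exact: nC|exact: noW].
  have cuv : connect (adj_in (~: J i)) u v by move: vC; rewrite -Clu inE.
  have := closed_connect cl cuv; rewrite [u \in _]inE [v \in _]inE /= uC vC (normal_T_core (nC u uC) Tu) /=.
  by move=> <-.
have spC : special i (Cl i x).
  by apply/forall_inP => v vC; rewrite nC ?coreC ?noW.
have phiT v : v \in Cl i x -> Tv v -> phi i v = ((sv v)%:R^-1)%R.
  move=> vC Tv_; by rewrite /phi nC // (negbTE (noW v vC)) Tv_ (Cl_eq vC) spC.
have sv_ge1 v : v \in Cl i x -> 0 < sv v.
  move=> vC; apply/card_gt0P; exists i; by rewrite inE (Cl_eq vC).
have sv_le3 v : sv v <= 3.
  by have := max_card (mem [set j | special j (Cl j v)]); rewrite card_ord.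
case: (boolP [exists v in Cl i x, Tv v && (sv v <= 1)]).
  case/exists_inP => v vC /andP[Tv_ s1].
  rewrite (bigD1 v) //= phiT //.
  have -> : sv v = 1 by apply/eqP; rewrite eqn_leq s1 sv_ge1.
  rewrite invr1 lerDl; apply: sumr_ge0 => w _; exact: phi_ge0.
rewrite negb_exists_in => /forall_inP s2.
have s2u : 1 < sv u by move: (s2 u uC); rewrite Tu /= ltnNge.
have [j [ij spj]] : exists j, i != j /\ special j (Cl j u).
  have : 0 < #|[set j | special j (Cl j u)] :\ i|.
    by move: s2u; rewrite /sv (cardsD1 i) inE (Cl_eq uC) spC /= add1n ltnS.
  case/card_gt0P => j; rewrite !inE => /andP[ji spj]; exists j; by rewrite eq_sym ji.
have allT v : v \in Cl i x -> Tv v.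
  move=> vC.
  have Wj y : y \in Cl j u -> ~~ Wv j y.
    move=> yC; have := spj; rewrite -(Cl_eq yC) => /forall_inP/(_ y (Cl_self j y)).
    by case/and3P.
  have cl : closed (adj_in (~: J i)) [pred y | (y \in Cl i x) && (y \in Cl j u)].
    move=> y z ayz; rewrite [y \in _]inE [z \in _]inE /= -(Cl_adj x ayz).
    case yC: (y \in Cl i x) => //=.
    have zC : z \in Cl i x by rewrite -(Cl_adj x ayz).
    apply/idP/idP => c.
      have [_ a2] := T_step ij ayz (nC y yC) (coreC y yC) (noW y yC) (Wj y c).
      by rewrite -(Cl_adj u a2).
    have azy : adj_in (~: J i) z y by rewrite adj_sym.
    have [_ a2] := T_step ij azy (nC z zC) (coreC z zC) (noW z zC) (Wj z c).
    by rewrite -(Cl_adj u a2).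
  have cuv : connect (adj_in (~: J i)) u v by move: vC; rewrite -Clu inE.
  have := closed_connect cl cuv; rewrite [u \in _]inE [v \in _]inE /= uC vC Cl_self /= => /esym vu.
  exact: T_of ij (nC v vC) (coreC v vC) (noW v vC) (Wj v vu).
have C3 : 3 <= #|Cl i x|.
  have : 1 < #|Cl i x|.
    have /existsP[e /andP[ie /eqP me]] := coreC u uC.
    have [w [iw uw]] := other_end ie.
    have aw : adj_in (~: J i) u w by apply: (inc_adj (e := e)); rewrite // inE mult0.
    apply/card_gt1P; exists u, w; split => //; by rewrite -(Cl_adj x aw).
  by move: oC; case: #|Cl i x| => [|[|[|]]].
apply: (@le_trans _ _ (\sum_(v in Cl i x) (3%:R^-1 : rat))%R).
  rewrite sumr_const -mulr_natr.
  have h : (3%:R <= #|Cl i x|%:R :> rat)%R by rewrite ler_nat.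
  lra.
apply: ler_sum => v vC; rewrite phiT ?allT //.
rewrite lef_pV2 ?posrE ?ltr0n ?sv_ge1 // ler_nat //.
Qed.

Lemma oddJ_le i : (((oddJ (J i))%:R : rat) <= \sum_v phi i v)%R.
Proof.
rewrite /oddJ /odd_comps.
set O := [set C0 in components (~: J i) | odd #|C0|].
have memO C0 : C0 \in O -> exists x, C0 = Cl i x /\ odd #|C0|.
  by rewrite inE => /andP[/imsetP[x _ ->] oc]; exists x.
apply: (@le_trans _ _ (\sum_(C0 in O) \sum_(v in C0) phi i v)%R).
  rewrite -sum1_card natr_sum; apply: ler_sum => C0 /memO[x [-> oc]].
  exact: comp_bound.
rewrite [X in (_ <= X)%R](bigID (fun v => Cl i v \in O)) /=; apply: ler_wpDr.
  by apply: sumr_ge0 => w _; exact: phi_ge0.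
rewrite (partition_big (fun v => Cl i v) (mem O)) //=.
apply: ler_sum => C0 HC0; rewrite le_eqVlt; apply/orP; left; apply/eqP.
apply: eq_bigl => v; have [x [EC _]] := memO C0 HC0.
rewrite EC /Cl in_clsE -/(Cl i v) -/(Cl i x); apply/idP/idP => [H|/andP[_ //]].
by rewrite H andbT; move/eqP: H => ->; rewrite -EC.
Qed.

Lemma total_bound :
  (\sum_(i < 3) ((oddJ (J i))%:R : rat) <=
   3%:R * (\sum_(i < 3) (nJ (J i))%:R) + 2%:R * #|E0s|%:R)%R.
Proof.
apply: (@le_trans _ _ (\sum_(i < 3) \sum_v phi i v)%R).
  by apply: ler_sum => i _; exact: oddJ_le.
rewrite exchange_big /=.
apply: (@le_trans _ _ (\sum_v (3%:R * #|[set i | deg_in (J i) v == 3]|%:R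
                           + #|[set e in E0s | inc e v]|%:R))%R).
  by apply: ler_sum => v _; exact: budget.
rewrite big_split /= -mulr_sumr -!natr_sum.
have -> : \sum_v #|[set e in E0s | inc e v]| = 2 * #|E0s| by exact: handshake.
have -> : \sum_v #|[set i | deg_in (J i) v == 3]| = \sum_(i < 3) nJ (J i).
  under eq_bigr do rewrite -sum1_card.
  rewrite (exchange_big_dep xpredT) //=; apply: eq_bigr => i _.
  rewrite /nJ -sum1_card; apply: eq_bigl => v; by rewrite !inE.
by rewrite natrM.
Qed.
End Joins.

Unset Implicit Arguments.

Theorem corollary2p4 (G : mgraph) :
  cubic G -> bridgeless G ->
  ((weak_oddness G)%:R <= (2%:R / 3%:R) * mu3' G :> rat)%R.
Proof.
move=> cub _.
have j3 : joins3 ([set: gE G], [set: gE G], [set: gE G]).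
  by rewrite /joins3 /is_join /=; apply/and3P; split; apply/forallP => v.
rewrite /mu3'; case: arg_minnP => // t jt _.
case/and3P: jt => j1 j2 j3'.
pose J (i : 'I_3) := if val i == 0 then t.1.1 else if val i == 1 then t.1.2 else t.2.
have HJ i : is_join (J i) by rewrite /J; case: ifP => _ //; case: ifP.
have jset : is_join [set: gE G] by apply/forallP.
have wle i : weak_oddness G <= oddJ (J i).
  by rewrite /weak_oddness; case: arg_minnP => // J0 _ min; apply: min.
have tot := total_bound cub HJ.
rewrite !big_ord_recl !big_ord0 /= in tot.
have E0E : E0s J = E0 t.
  apply/setP => e; rewrite !inE /mult !big_ord_recl big_ord0 /=.
  by case: (e \in t.1.1); case: (e \in t.1.2); case: (e \in t.2).
rewrite E0E in tot.
have w1 := wle ord0; have w2 := wle (lift ord0 ord0); have w3 := wle (lift ord0 (lift ord0 ord0)).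
rewrite /J /= in w1 w2 w3.
rewrite /core_l.
move: tot; rewrite /J /=.
set a := oddJ t.1.1; set b := oddJ t.1.2; set c := oddJ t.2.
set n1 := nJ t.1.1; set n2 := nJ t.1.2; set n3 := nJ t.2.
set z := #|E0 t|; set w := weak_oddness G.
rewrite !natrD => tot.
have h1 : (w%:R <= a%:R :> rat)%R by rewrite ler_nat.
have h2 : (w%:R <= b%:R :> rat)%R by rewrite ler_nat.
have h3 : (w%:R <= c%:R :> rat)%R by rewrite ler_nat.
lra.
Qed.
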